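(* For every integer $n\ge1$, \[ p(n,n-1)=\tfrac12\,n(n-1),\qquad u(n,n-1)=\tfrac12\,(n-1)(n-2). \]
   Context: $p(n,l)$ is the number of isomorphism classes of posets with $n$ elements whose longest chain has exactly $l$ elements; $u(n,l)$ is the number of those which are locally unsymmetric. Definitions: $\ell(X)$ is the cardinality of a longest chain of a poset $X$. A subset $A$ of a poset $X$ is maximally ordered in $X$ if $|\{(a,b)\in A\times A:a<b\}|$ is maximal among subsets of $X$ of cardinality $|A|$. For $\sigma\in\mathrm{Aut}(P)$, $\Sigma(\sigma)=\{a:\sigma(a)\ne a\}$. For a finite poset $Q$ and $r\ge2$: $\sigma$ is a $(Q,r)$-generator if there exist subsets $S_0,\dots,S_{r-1}\subset\Sigma(\sigma)$, each isomorphic to $Q$, which are smallest maximally ordered subsets of $\Sigma(\sigma)$ with $\sigma(S_i)=S_{(i+1)\bmod r}$, $\ell(S_i)=\ell(\Sigma(\sigma))$, $\bigcup_iS_i=\Sigma(\sigma)$; distinct $S_i,S_j$ are $(Q,r)$-symmetric subsets. Elements $a,b$ are $(Q,r,0)$-symmetric if $a=b$; $(Q,r,1)$-symmetric if there are $(Q,r)$-symmetric subsets $A,B$ with generator $\sigma$, $a\in A$, $b=\sigma^q(a)\in B$, $1\le q<r$; for $m\ge2$, $(Q,r,m)$-symmetric if not $(Q,r,j)$-symmetric for $j<m$ but there exist $c$, $j<m$ with $a$ $(Q,r,j)$-symmetric to $c$ and $c$ $(Q,r,m-j)$-symmetric to $b$; $(Q,r)$-symmetric if $(Q,r,m)$-symmetric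 for some $m\ge0$ (an equivalence relation). $P\oslash_rQ$ is the quotient poset of equivalence classes with $E\le F$ iff some $e\in E$, $f\in F$ satisfy $e\le f$. A poset $P$ is locally symmetric if $P\oslash_rQ\not\cong P$ for some finite poset $Q$ and some $r\ge2$; it is locally unsymmetric otherwise. *)

(* Defs.v *)
From HB Require Import structures.
From mathcomp Require Import all_boot all_order all_fingroup.
From mathcomp Require Import boolp.

Set Implicit Arguments.
Unset Strict Implicit.
Unset Printing Implicit Defensive.

Local Open Scope group_scope.

Definition is_poset (T : Type) (R : rel T) :=
  [/\ reflexive R, antisymmetric R & transitive R].

Section LocalSymmetry.
Variable T : finType.
Implicit Types (R : rel T) (A B X : {set T}).


Definition is_chain R A := [forall x in A, forall y in A, R x y || R y x].

Definition height R X :=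
  \max_(A : {set T} | (A \subset X) && is_chain R A) #|A|.

Definition sltR R x y := (x != y) && R x y.

Definition num_ordered R A := #|[set p in setX A A | sltR R p.1 p.2]|.

Definition max_ordered R X A :=
  (A \subset X) &&
  [forall B : {set T}, ((B \subset X) && (#|B| == #|A|)) ==>
                       (num_ordered R B <= num_ordered R A)].

Definition moved (s : {perm T}) := [set a | s a != a].

Definition is_aut R (s : {perm T}) := [forall x, forall y, R (s x) (s y) == R x y].

Definition iso_to_sub k (Q : rel 'I_k) R A :=
  [exists f : {ffun 'I_k -> T},
     [&& injectiveb f, (f @: setT == A) &
         [forall i, forall j, Q i j == R (f i) (f j)]]].

Definition cyc_family R (s : {perm T}) r (S : {ffun 'I_r -> {set T}}) :=
  [&& [forall i, max_ordered R (moved s) (S i)],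
      [forall i, s @: S i == S (ordS i)],
      [forall i, height R (S i) == height R (moved s)] &
      \bigcup_i S i == moved s].

Definition smallest_cyc_family R (s : {perm T}) r (S : {ffun 'I_r -> {set T}}) :=
  cyc_family R s S &&
  [forall S' : {ffun 'I_r -> {set T}},
     cyc_family R s S' ==> [forall i, forall j, #|S i| <= #|S' j|]].

Definition generator_fam k (Q : rel 'I_k) r R (s : {perm T})
    (S : {ffun 'I_r -> {set T}}) :=
  [&& is_aut R s, smallest_cyc_family R s S & [forall i, iso_to_sub Q R (S i)]].

Definition sym1 k (Q : rel 'I_k) r R : rel T := fun a b =>
  [exists s : {perm T}, exists S : {ffun 'I_r -> {set T}},
     generator_fam Q R s S &&
     [exists i, exists j,
        [&& S i != S j, a \in S i, b \in S j &
            [exists q : 'I_r, (0 < val q) && (b == (s ^+ val q) a)]]]].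

(* (Q,r)-symmetry = union over m of (Q,r,m)-symmetry
   = reflexive-transitive closure of (Q,r,1)-symmetry. *)
Definition symQr k (Q : rel 'I_k) r R : rel T := connect (sym1 Q r R).

Definition quot_classes k (Q : rel 'I_k) r R : {set {set T}} :=
  [set [set y | symQr Q r R x y] | x : T].

Definition quot_le R (E F : {set T}) := [exists e in E, exists f in F, R e f].

Definition quot_iso k (Q : rel 'I_k) r R :=
  exists f : {set T} -> T,
    [/\ {in quot_classes Q r R &, injective f},
        (forall y, exists2 E, E \in quot_classes Q r R & f E = y) &
        {in quot_classes Q r R &, forall E F, quot_le R E F = R (f E) (f F)}].

Definition locally_symmetric R :=
  exists (k : nat) (Q : rel 'I_k) (r : nat),
    [/\ is_poset Q, 2 <= r & ~ quot_iso Q r R].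

Definition locally_unsymmetric R := ~ locally_symmetric R.

End LocalSymmetry.

Definition rel_of n (E : {set 'I_n * 'I_n}) : rel 'I_n := fun x y => (x, y) \in E.

Definition iso_graph n (E1 E2 : {set 'I_n * 'I_n}) :=
  [exists s : {perm 'I_n}, [forall x, forall y, ((x, y) \in E1) == ((s x, s y) \in E2)]].

Definition posets_nl n l : {set {set 'I_n * 'I_n}} :=
  [set E | `[< is_poset (rel_of E) >] && (height (rel_of E) setT == l)].

Definition num_iso_classes n (U : {set {set 'I_n * 'I_n}}) :=
  #|[set [set E' in U | iso_graph E E'] | E in U]|.

Definition p_count n l := num_iso_classes (posets_nl n l).

Definition u_count n l :=
  num_iso_classes [set E in posets_nl n l | `[< locally_unsymmetric (rel_of E) >]].

(* Main.v *)
Require Import Defs.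
From mathcomp Require Import all_boot.
From mathcomp Require Import all_order all_fingroup boolp zify.
Set Implicit Arguments. Unset Strict Implicit. Unset Printing Implicit Defensive.

Section Gen.
Variable T : finType.
Implicit Types (R : rel T).

Lemma height_le_card R (X : {set T}) : height R X <= #|X|.
Proof. by apply/bigmax_leqP => A /andP[sub _]; exact: subset_leq_card. Qed.

Lemma height_ge R (X A : {set T}) : A \subset X -> is_chain R A -> #|A| <= height R X.
Proof. by move=> s c; apply: (leq_bigmax_cond A); rewrite s c. Qed.

Lemma chain1 R a : R a a -> is_chain R [set a].
Proof.
move=> Ha; apply/forallP => y; apply/implyP => /set1P ->.
by apply/forallP => z; apply/implyP => /set1P ->; rewrite Ha.
Qed.

Lemma num_ordered1 R a : num_ordered R [set a] = 0.
Proof.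
apply/eqP; rewrite cards_eq0; apply/eqP/setP => p; rewrite inE [RHS]inE.
apply/negbTE/negP => /andP[]; case: p => p1 p2; rewrite in_setX => /andP[/set1P-> /set1P->].
by rewrite /sltR eqxx.
Qed.

Lemma moved_tperm (x c : T) : x != c -> moved (tperm x c) = [set x; c].
Proof.
move=> Hxc; apply/setP => y; rewrite !inE.
case: tpermP => [->|->|/eqP H1 /eqP H2]; first by rewrite eqxx eq_sym Hxc.
  by rewrite eqxx orbT Hxc.
by rewrite eqxx (negbTE H1) (negbTE H2).
Qed.

Lemma sym_of_swap R (x c : T) : is_poset R -> x != c -> ~~ R x c -> ~~ R c x ->
  is_aut R (tperm x c) -> locally_symmetric R.
Proof.
move=> [Rr _ _] Hxc H1 H2 Haut.
exists 1, (fun _ _ => true), 2; split => //.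
  split => //; by move=> i j _; rewrite (ord1 i) (ord1 j).
move=> [f [_ Hsurj _]].
set s := tperm x c.
have Hm := moved_tperm Hxc.
pose S : {ffun 'I_2 -> {set T}} := [ffun i : 'I_2 => if val i == 0 then [set x] else [set c]].
have Hh1 : forall a, height R [set a] = 1.
  move=> a; apply/eqP; rewrite eqn_leq -{1}(cards1 a) height_le_card /=.
  by rewrite -{1}(cards1 a) height_ge // chain1.
have Hh2: height R (moved s) = 1.
  rewrite Hm; apply/eqP; rewrite eqn_leq; apply/andP; split; last first.
    by rewrite -(cards1 x) height_ge ?chain1 // sub1set !inE eqxx.
  apply/bigmax_leqP => A /andP[sA cA].
  case Hx: (x \in A); case Hc: (c \in A).
  - move/forallP: cA => /(_ x); rewrite Hx /= => /forallP /(_ c).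
    by rewrite Hc /= (negbTE H1) (negbTE H2).
  - rewrite -(cards1 x); apply subset_leq_card; apply/subsetP => y Hy.
    move/subsetP: sA => /(_ y Hy); rewrite !inE; case/orP => // /eqP E.
    by rewrite E Hc in Hy.
  - rewrite -(cards1 c); apply subset_leq_card; apply/subsetP => y Hy.
    move/subsetP: sA => /(_ y Hy); rewrite !inE; case/orP => // /eqP E.
    by rewrite E Hx in Hy.
  - rewrite -(cards1 c); apply subset_leq_card; apply/subsetP => y Hy.
    move/subsetP: sA => /(_ y Hy); rewrite !inE; case/orP => /eqP E.
    by rewrite E Hx in Hy. by rewrite E Hc in Hy.
have HS0 : S ord0 = [set x] by rewrite ffunE.
have HS1 : S ord_max = [set c] by rewrite ffunE.
have Hi2 : forall i : 'I_2, i = ord0 \/ i = ord_max.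
  by case => [[|[|k]] Hk] //; [left|right]; apply: val_inj.
have Hcyc : cyc_family R s S.
  apply/and4P; split.
  - apply/forallP => i; apply/andP; split.
      by case: (Hi2 i) => ->; rewrite ?HS0 ?HS1 Hm sub1set !inE eqxx ?orbT.
    apply/forallP => B; apply/implyP => /andP[_ HB].
    by case: (Hi2 i) HB => ->; rewrite ?HS0 ?HS1 cards1 => /cards1P [b ->]; rewrite !num_ordered1.
  - apply/forallP => i; case: (Hi2 i) => ->.
      by rewrite HS0 imset_set1 /s tpermL ffunE.
    by rewrite HS1 imset_set1 /s tpermR ffunE.
  - by apply/forallP => i; case: (Hi2 i) => ->; rewrite ?HS0 ?HS1 Hh1 Hh2.
  - apply/eqP/setP => y; rewrite Hm !inE; apply/bigcupP/idP.
      by case=> i _; case: (Hi2 i) => ->; rewrite ?HS0 ?HS1 inE => ->; rewrite ?orbT.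
    case/orP => Hy; [exists ord0 | exists ord_max] => //; by rewrite ?HS0 ?HS1 inE.
have Hgen : generator_fam (fun _ _ : 'I_1 => true) R s S.
  apply/and3P; split => //.
    apply/andP; split => //; apply/forallP => S'; apply/implyP => /and4P[_ _ /forallP Hh _].
    apply/forallP => i; apply/forallP => j.
    have ->: #|S i| = 1 by case: (Hi2 i) => ->; rewrite ?HS0 ?HS1 cards1.
    by apply: leq_trans (height_le_card R (S' j)); rewrite (eqP (Hh j)) Hh2.
  apply/forallP => i; apply/existsP.
  exists [ffun _ => if val i == 0 then x else c]; apply/and3P; split.
  - by apply/injectiveP => a b _; rewrite (ord1 a) (ord1 b).
  - apply/eqP/setP => y; case: (Hi2 i) => ->; rewrite ?HS0 ?HS1 inE;
    apply/imsetP/eqP => [[a _ ->]|->]; rewrite ?ffunE //; by exists ord0; rewrite ?ffunE.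
  - by apply/forallP => a; apply/forallP => b; rewrite !ffunE Rr.
have Hsym : forall a b, s a = b -> a \in [set x; c] -> sym1 (fun _ _ : 'I_1 => true) 2 R a b.
  move=> a b Hab Ha; apply/existsP; exists s; apply/existsP; exists S; rewrite Hgen /=.
  have Hb : b \in [set x; c] by move: Ha; rewrite !inE -Hab /s => /orP[]/eqP->; rewrite ?tpermL ?tpermR eqxx ?orbT.
  move: Ha Hb Hab; rewrite !inE => /orP[] /eqP -> /orP[] /eqP -> Hab.
  - by rewrite /s tpermL in Hab; rewrite Hab eqxx in Hxc.
  - apply/existsP; exists ord0; apply/existsP; exists ord_max.
    rewrite HS0 HS1 !inE !eqxx /= (inj_eq set1_inj) Hxc /=.
    by apply/existsP; exists ord_max => /=; rewrite expg1 /s ?tpermL ?tpermR.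
  - apply/existsP; exists ord_max; apply/existsP; exists ord0.
    rewrite HS0 HS1 !inE !eqxx /= (inj_eq set1_inj) eq_sym Hxc /=.
    by apply/existsP; exists ord_max => /=; rewrite expg1 /s ?tpermL ?tpermR.
  - by rewrite /s tpermR in Hab; rewrite Hab eqxx in Hxc.
have Hxc' : symQr (fun _ _ : 'I_1 => true) 2 R x c.
  by apply: connect1; apply: Hsym; rewrite /s ?tpermL // !inE eqxx.
have Hcx' : symQr (fun _ _ : 'I_1 => true) 2 R c x.
  by apply: connect1; apply: Hsym; rewrite /s ?tpermR // !inE eqxx ?orbT.
set cls := fun a => [set y | symQr (fun _ _ : 'I_1 => true) 2 R a y].
have Hcl : cls x = cls c.
  apply/setP => y; rewrite !inE; apply/idP/idP => H.
    exact: connect_trans Hcx' H.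
  exact: connect_trans Hxc' H.
have Hlt : #|quot_classes (fun _ _ : 'I_1 => true) 2 R| < #|T|.
  rewrite ltn_neqAle leq_imset_card andbT; apply/negP => /imset_injP Hinj.
  by move: (Hinj x c isT isT Hcl) => /eqP; rewrite (negbTE Hxc).
have : #|T| <= #|quot_classes (fun _ _ : 'I_1 => true) 2 R|.
  apply: (leq_trans _ (leq_imset_card f _)).
  rewrite -cardsT; apply: subset_leq_card; apply/subsetP => y _.
  by case: (Hsurj y) => E HE <-; apply/imsetP; exists E.
by rewrite leqNgt Hlt.
Qed.





Lemma height_attained R (X : {set T}) : exists2 A : {set T}, (A \subset X) && is_chain R A & #|A| = height R X.
Proof.
have: #|[pred A : {set T} | (A \subset X) && is_chain R A]| > 0.
  apply/card_gt0P; exists set0; rewrite inE sub0set /=.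
  by apply/forallP => a; rewrite inE.
move/(eq_bigmax_cond (fun A : {set T} => #|A|)) => [A HA HM].
by exists A => //; rewrite /height HM.
Qed.

Lemma connect_false (e : rel T) x y : (forall a b, ~~ e a b) -> connect e x y = (x == y).
Proof.
move=> He; apply/idP/idP; last by move/eqP->; exact: connect0.
case/connectP => [[|z p]] /=; first by move=> _ ->.
by rewrite (negbTE (He _ _)).
Qed.

Lemma pick1 (x0 a : T) : odflt x0 [pick y in [set a]] = a.
Proof. by case: pickP => [y /set1P -> // | /(_ a)]; rewrite set11. Qed.

Lemma unsym_of_trivial (x0 : T) R :
  (forall s : {perm T}, is_aut R s -> s = 1%g) -> locally_unsymmetric R.
Proof.
move=> Haut [k [Q [r [_ _ Hn]]]]; apply: Hn.
have Hs: forall a b, ~~ sym1 Q r R a b.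
  move=> a b; apply/negP => /existsP[s /existsP[S /andP[/and3P[Ha /andP[/and4P[_ _ _ Hcup] _] _] /existsP[i /existsP[j /and4P[_ Hai _ _]]]]]].
  rewrite (Haut s Ha) in Hcup.
  have: a \in \bigcup_i S i by apply/bigcupP; exists i.
  by rewrite (eqP Hcup) inE perm1 eqxx.
have Hset: forall a, [set y | symQr Q r R a y] = [set a].
  by move=> a; apply/setP => y; rewrite !inE /symQr connect_false // eq_sym.
exists (fun E : {set T} => odflt x0 [pick y in E]); split.
- by move=> E F /imsetP[a _ ->] /imsetP[b _ ->]; rewrite !Hset !pick1 => ->.
- move=> y; exists [set y]; last exact: pick1.
  by apply/imsetP; exists y => //; rewrite Hset.
- move=> E F /imsetP[a _ ->] /imsetP[b _ ->]; rewrite !Hset !pick1.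
  apply/idP/idP.
    by case/existsP=> e /andP[/set1P-> /existsP[f /andP[/set1P-> ]]].
  by move=> Hab; apply/existsP; exists a; rewrite set11 /=; apply/existsP; exists b; rewrite set11.
Qed.


Lemma autP R (s : {perm T}) : is_aut R s -> forall a b, R (s a) (s b) = R a b.
Proof. by move=> /forallP H a b; move/forallP: (H a) => /(_ b) /eqP. Qed.

Lemma down_proper R y z : is_poset R -> R y z -> y != z ->
  [set w | R w y] \proper [set w | R w z].
Proof.
move=> [Rr Ra Rt] Hyz Hne; apply/properP; split.
  by apply/subsetP => w; rewrite !inE => H; apply: Rt Hyz.
exists z; rewrite !inE ?Rr //; apply/negP => Hzy.
by move: Hne; rewrite (Ra y z) ?eqxx // Hyz Hzy.
Qed.

Lemma card_down_aut R (s : {perm T}) y : is_aut R s ->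
  #|[set w | R w (s y)]| = #|[set w | R w y]|.
Proof.
move=> /autP Ha; rewrite -[RHS](card_imset _ (@perm_inj _ s)); apply: eq_card => w; rewrite inE; apply/idP/imsetP => [H | [v Hv ->]].
  by exists (s^-1 w)%g; rewrite ?permKV // inE -Ha permKV.
by rewrite Ha; rewrite inE in Hv.
Qed.

Lemma aut_fix R (s : {perm T}) y : is_poset R -> is_aut R s ->
  R y (s y) || R (s y) y -> s y = y.
Proof.
move=> HP Ha H; apply/eqP/negPn/negP => Hne.
case/orP: H => H.
  have Hne' : y != s y by rewrite eq_sym.
  move: (proper_card (down_proper HP H Hne')).
  by rewrite card_down_aut // ltnn.
have Hne' : s y != y by [].
move: (proper_card (down_proper HP H Hne')).
by rewrite card_down_aut // ltnn.
Qed.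

Lemma aut_trivial R (x c d : T) : is_poset R ->
  (forall y z, y != x -> z != x -> R y z || R z y) ->
  c != d -> c != x -> d != x -> ~~ R x c -> ~~ R c x -> ~~ R x d -> ~~ R d x ->
  forall s : {perm T}, is_aut R s -> s = 1%g.
Proof.
move=> HP Hch Hcd Hcx Hdx H1 H2 H3 H4 s Hs.
have HA := autP Hs.
have ClA : forall y, s y != y -> y = x \/ s y = x.
  move=> y Hy; case: (eqVneq y x) => [->|Hyx]; [by left|].
  case: (eqVneq (s y) x) => [->|Hsyx]; [by right|].
  by move: Hy; rewrite (aut_fix HP Hs) ?eqxx // Hch.
have Hx : s x = x.
  apply/eqP/negP => Hsx.
  set e := (s^-1 x)%g.
  have He : s e = x by rewrite /e permKV.
  have Hex : e != x by apply/eqP => E; move: Hsx; rewrite -{1}E He eqxx.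
  have [d' [Hd'e Hd'x Hd'1 Hd'2]] : exists d', [/\ d' != e, d' != x, ~~ R x d' & ~~ R d' x].
    by case: (eqVneq e c) => [->|Nec]; [exists d | exists c]; split; rewrite // eq_sym.
  have Hsd' : s d' = d'.
    apply/eqP/negP => /negP Hn; case: (ClA d' Hn) => E.
      by rewrite E eqxx in Hd'x.
    by move: Hd'e; rewrite -(inj_eq (@perm_inj _ s)) E He eqxx.
  case/orP: (Hch e d' Hex Hd'x) => H.
    by move: Hd'1; rewrite -He -Hsd' HA H.
  by move: Hd'2; rewrite -He -Hsd' HA H.
apply/permP => y; rewrite perm1; apply/eqP/negP => /negP Hn.
case: (ClA y Hn) => E.
  by rewrite E Hx eqxx in Hn.
have Eyx : y = x by apply: (@perm_inj _ s); rewrite E Hx.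
by move: Hn; rewrite Eyx Hx eqxx.
Qed.

Lemma swap_aut R (x c : T) : is_poset R -> ~~ R x c -> ~~ R c x ->
  (forall z, z != x -> z != c -> (R z x || R x z) && (R z c || R c z)) ->
  is_aut R (tperm x c).
Proof.
move=> [Rr Ra Rt] H1 H2 Hz.
have K : forall a b e, R a b -> R b e -> ~~ R a e -> False.
  by move=> a b e Hab Hbe; rewrite (Rt _ _ _ Hab Hbe).
have E1 : forall z, z != x -> z != c -> R z x = R z c.
  move=> z zx zc; case/andP: (Hz z zx zc) => /orP[] A /orP[] B; apply/idP/idP => // Hh; exfalso;
  first [ by apply: (K _ _ _ A B) | by apply: (K _ _ _ B A) | by apply: (K _ _ _ Hh A)
     | by apply: (K _ _ _ A Hh) | by apply: (K _ _ _ Hh B) | by apply: (K _ _ _ B Hh) ].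
have E2 : forall z, z != x -> z != c -> R x z = R c z.
  move=> z zx zc; case/andP: (Hz z zx zc) => /orP[] A /orP[] B; apply/idP/idP => // Hh; exfalso;
  first [ by apply: (K _ _ _ A B) | by apply: (K _ _ _ B A) | by apply: (K _ _ _ Hh A)
     | by apply: (K _ _ _ A Hh) | by apply: (K _ _ _ Hh B) | by apply: (K _ _ _ B Hh) ].
apply/forallP => a; apply/forallP => b; apply/eqP.
case: (tpermP x c a) => [->|->|/eqP Ha1 /eqP Ha2]; case: (tpermP x c b) => [->|->|/eqP Hb1 /eqP Hb2];
  rewrite ?Rr ?(negbTE H1) ?(negbTE H2) ?E1 ?E2 //.
Qed.
End Gen.

Definition Gr m (i j : nat) : rel 'I_m.+1 := fun u v =>
  if (u < m) && (v < m) then u <= v else if u < m then u < i else if v < m then j <= v else true.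
Arguments Gr : clear implicits.

Ltac ordcase m u := have := ltn_ord u; case: (ltnP u m) => /=.

Lemma Gr_poset (m i j : nat) : i <= j -> is_poset (Gr m i j).
Proof.
move=> Hij; split.
- move=> u; rewrite /Gr; ordcase m u; lia.
- move=> u v; rewrite /Gr => H; apply/val_inj/eqP; move: H.
  ordcase m u; ordcase m v; lia.
- move=> v u w; rewrite /Gr; ordcase m u; ordcase m v; ordcase m w; lia.
Qed.

Definition GrG m i j : {set 'I_m.+1 * 'I_m.+1} := [set p | Gr m i j p.1 p.2].

Lemma rel_GrG m i j : rel_of (GrG m i j) = Gr m i j.
Proof. by apply: funext => u; apply: funext => v; rewrite /rel_of inE. Qed.

Lemma card_ord_int n lo hi : hi <= n -> #|[set y : 'I_n | lo <= y < hi]| = hi - lo.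
Proof.
have count_iota_int lo' hi' n' : count (fun k => lo' <= k < hi') (iota 0 n') = minn hi' n' - lo'.
  elim: n' => [|n' IH]. by rewrite /=; lia.
  rewrite -addn1 iotaD count_cat /= add0n addn0 IH.
  case: (leqP lo' n'); case: (ltnP n' hi') => /=; lia.
move=> H; have ->: hi - lo = minn hi n - lo by lia.
rewrite -count_iota_int -val_enum_ord count_map cardsE cardE -size_filter.
rewrite /enum_mem -filter_predI; congr size; apply: eq_filter => x /=.
by rewrite andbT.
Qed.

Lemma inordV m k : k <= m -> nat_of_ord (inord k : 'I_m.+1) = k.
Proof. by move=> H; rewrite inordK. Qed.

Lemma Gr_height m i j : i < j <= m -> height (Gr m i j) setT = m.
Proof.
move=> /andP[Hij Hjm]; apply/eqP; rewrite eqn_leq; apply/andP; split.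
  apply/bigmax_leqP => A /andP[_ cA]; rewrite leqNgt; apply/negP => HA.
  have HAT : A = setT.
    apply/eqP; rewrite eqEcard subsetT cardsT card_ord.
    by move: (max_card A); rewrite card_ord.
  move/forallP: cA => /(_ ord_max); rewrite HAT inE /= => /forallP /(_ (inord i)).
  have Him : i < m by lia.
  rewrite inE /Gr /= inordV ?ltnn ?Him /=; lia.
have := @height_ge _ (Gr m i j) _ _ (subsetT [set y : 'I_m.+1 | 0 <= y < m]).
rewrite card_ord_int // subn0; apply.
apply/forallP => u; apply/implyP; rewrite inE => Hu; apply/forallP => v; apply/implyP; rewrite inE => Hv.
by move: Hu Hv; rewrite /Gr /= => -> -> /=; rewrite leq_total.
Qed.

Section Inv.
Variable T : finType.
Implicit Types (R : rel T).

Definition univ R z := [forall w, R z w || R w z].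
Definition Palpha R y := univ R y && [forall z, ~~ univ R z ==> R y z].
Definition alpha R := #|[set y | Palpha R y]|.

Lemma forall_perm (s : {perm T}) (P : pred T) : [forall z, P z] = [forall z, P (s z)].
Proof.
apply/forallP/forallP => H z; first exact: H.
by rewrite -(permKV s z); exact: H.
Qed.

Lemma card_perm_pred (s : {perm T}) (P : pred T) : #|[set y | P (s y)]| = #|[set y | P y]|.
Proof.
rewrite -[LHS](card_imset _ (@perm_inj _ s)); apply: eq_card => w; rewrite inE.
apply/imsetP/idP => [[v Hv ->]| H]; first by rewrite inE in Hv.
by exists (s^-1 w)%g; rewrite ?inE permKV.
Qed.

Lemma alpha_iso R1 R2 (s : {perm T}) : (forall a b, R1 a b = R2 (s a) (s b)) -> alpha R1 = alpha R2.
Proof.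
move=> H.
have Hu : forall y, univ R2 (s y) = univ R1 y.
  by move=> y; rewrite /univ (forall_perm s); apply: eq_forallb => w; rewrite !H.
rewrite /alpha -[RHS](card_perm_pred s); apply: eq_card => y; rewrite !inE /Palpha Hu.
by rewrite [in RHS](forall_perm s); congr andb; apply: eq_forallb => z; rewrite Hu H.
Qed.

Lemma univ_flip R z : univ (fun a b => R b a) z = univ R z.
Proof. by rewrite /univ; apply: eq_forallb => w; rewrite orbC. Qed.

End Inv.

Lemma iso_graphP n (E1 E2 : {set 'I_n * 'I_n}) : iso_graph E1 E2 ->
  exists s : {perm 'I_n}, forall a b, rel_of E1 a b = rel_of E2 (s a) (s b).
Proof. by case/existsP => s /forallP H; exists s => a b; move/forallP: (H a) => /(_ b) /eqP. Qed.

Section GrInv.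
Variables (m i j : nat).
Hypothesis Hij : i < j.
Hypothesis Hjm : j <= m.

Lemma univ_Gr z : univ (Gr m i j) z = (z < i) || ((j <= z) && (z < m)).
Proof.
have Him : i < m by lia.
apply/forallP/idP => [H|H w].
  case: (ltnP z m) => Hz.
    by move: (H ord_max); rewrite /Gr /= Hz ltnn /=; lia.
  move: (H (inord i)); rewrite /Gr inordV; last lia.
  have -> : (z < m) = false by lia.
  rewrite Him /=; lia.
by rewrite /Gr; ordcase m z; ordcase m w; lia.
Qed.

Lemma Palpha_Gr y : Palpha (Gr m i j) y = (y < i).
Proof.
have Him : i < m by lia.
rewrite /Palpha univ_Gr; apply/idP/idP.
  move=> /andP[Hu /forallP /(_ (inord i)) /implyP Hi].
  move: Hi; rewrite univ_Gr inordV; last lia.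
  move=> Hi; have: ~~ ((i < i) || (j <= i) && (i < m)) by lia.
  move/Hi; rewrite /Gr inordV; last lia.
  rewrite Him.
  by move: Hu; ordcase m y; lia.
move=> Hy; apply/andP; split; first lia.
apply/forallP => z; apply/implyP; rewrite univ_Gr => Hz.
by rewrite /Gr; move: Hz Hy; ordcase m y; ordcase m z; lia.
Qed.

Lemma Pbeta_Gr y : Palpha (fun a b => Gr m i j b a) y = (j <= y) && (y < m).
Proof.
have Him : i < m by lia.
rewrite /Palpha univ_flip univ_Gr; apply/idP/idP.
  move=> /andP[Hu /forallP /(_ (inord i)) /implyP Hi].
  move: Hi; rewrite univ_flip univ_Gr inordV; last lia.
  move=> Hi; have: ~~ ((i < i) || (j <= i) && (i < m)) by lia.
  move/Hi; rewrite /Gr inordV; last lia.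
  rewrite Him.
  by move: Hu; ordcase m y; lia.
move=> Hy; apply/andP; split; first lia.
apply/forallP => z; apply/implyP; rewrite univ_flip univ_Gr => Hz.
by rewrite /Gr; move: Hz Hy; ordcase m y; ordcase m z; lia.
Qed.

Lemma alpha_Gr : alpha (Gr m i j) = i.
Proof.
rewrite /alpha -[RHS]subn0 -(@card_ord_int m.+1 0 i); last lia.
by apply: eq_card => y; rewrite !inE Palpha_Gr.
Qed.

Lemma beta_Gr : alpha (fun a b => Gr m i j b a) = m - j.
Proof.
rewrite /alpha -(@card_ord_int m.+1 j m); last lia.
by apply: eq_card => y; rewrite !inE Pbeta_Gr.
Qed.
End GrInv.

Lemma Gr_iso_inj m i j i' j' : i < j <= m -> i' < j' <= m ->
  iso_graph (GrG m i j) (GrG m i' j') -> i = i' /\ j = j'.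
Proof.
move=> /andP[H1 H2] /andP[H3 H4] /iso_graphP [s Hs].
rewrite !rel_GrG in Hs.
have := alpha_iso Hs; rewrite !alpha_Gr // => ->.
have Hs' : forall a b, (fun a b => Gr m i j b a) a b = (fun a b => Gr m i' j' b a) (s a) (s b).
  by move=> a b /=; rewrite Hs.
have := @alpha_iso _ (fun a b => Gr m i j b a) (fun a b => Gr m i' j' b a) s Hs'.
rewrite !beta_Gr //; lia.
Qed.

Lemma card_lt_of (T : finType) (A B : {set T}) b :
  A \subset B -> b \in B -> b \notin A -> #|A| < #|B|.
Proof. by move=> HAB HbB HbA; apply: proper_card; apply/properP; split => //; exists b. Qed.

Section Decomp.
Variable m : nat.
Variable R : rel 'I_m.+1.
Hypothesis HP : is_poset R.
Hypothesis Hh : height R setT = m.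

Lemma decomp : exists a j (s : {perm 'I_m.+1}),
  [/\ a < j, j <= m & forall y z, R y z = Gr m a j (s y) (s z)].
Proof.
have [Rr Ra Rt] := HP.
have [A /andP[_ cA] HA] := height_attained R setT.
rewrite Hh in HA.
have : #|~: A| == 1 by have := cardsC A; rewrite card_ord HA; lia.
case/cards1P => x Hx.
have Hin : forall y, (y \in A) = (y != x).
  move=> y; apply/idP/idP => H.
    apply/eqP => E; have: y \in ~: A by rewrite Hx E set11.
    by rewrite inE H.
  apply/negPn/negP => Hn; have: y \in ~: A by rewrite in_setC.
  by rewrite Hx inE (negbTE H).
have Hch : forall y z, y != x -> z != x -> R y z || R z y.
  move=> y z Hy Hz; move/forallP: cA => /(_ y) /implyP; rewrite Hin => /(_ Hy).
  by move/forallP => /(_ z) /implyP; rewrite Hin; apply.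
have [c Hc] : exists c, ~~ (R x c || R c x).
  case: (boolP [exists c, ~~ (R x c || R c x)]) => [/existsP//|/existsPn H].
  have : m.+1 <= height R setT.
    rewrite -{1}(card_ord m.+1) -cardsT; apply: height_ge => //.
    apply/forallP => y; apply/implyP => _; apply/forallP => z; apply/implyP => _.
    case: (eqVneq y x) => [->|Hy]; first by move: (H z); rewrite negbK.
    case: (eqVneq z x) => [->|Hz]; first by move: (H y); rewrite negbK orbC.
    exact: Hch.
  by rewrite Hh ltnn.
have Hcx : c != x by apply/eqP => E; move: Hc; rewrite E Rr.
pose D y := [set w | (w != x) && R w y].
have HD : forall y, y != x -> 0 < #|D y| <= m.
  move=> y Hy; apply/andP; split.
    by apply/card_gt0P; exists y; rewrite inE Hy Rr.
  apply: (leq_trans _ (eq_leq HA)); apply: subset_leq_card; apply/subsetP => w; rewrite inE Hin.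
  by case/andP.
pose rank y := #|D y|.-1.
pose Dx := [set w | (w != x) && R w x].
pose Nx := [set w | (w != x) && ~~ R x w].
have F1 : forall y z, y != x -> z != x -> R y z = (rank y <= rank z).
  move=> y z Hy Hz; have Hdy := HD y Hy; have Hdz := HD z Hz; rewrite /rank.
  apply/idP/idP => H.
    have: #|D y| <= #|D z|.
      apply: subset_leq_card; apply/subsetP => w; rewrite !inE => /andP[-> Hw].
      exact: Rt Hw H.
    lia.
  apply/negPn/negP => Hn.
  have Hzy : R z y by move: (Hch y z Hy Hz); rewrite (negbTE Hn).
  have: #|D z| < #|D y|.
    apply: (@card_lt_of _ _ _ y).
    - by apply/subsetP => w; rewrite !inE => /andP[-> Hw]; exact: Rt Hw Hzy.
    - by rewrite inE Hy Rr.
    - by rewrite inE Hy.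
  move: H; rewrite /rank; lia.
have F2 : forall y, y != x -> R y x = (rank y < #|Dx|).
  move=> y Hy; have Hdy := HD y Hy; rewrite /rank.
  apply/idP/idP => H.
    have: #|D y| <= #|Dx|.
      apply: subset_leq_card; apply/subsetP => w; rewrite !inE => /andP[-> Hw].
      exact: Rt Hw H.
    lia.
  apply/negPn/negP => Hn.
  have: #|Dx| < #|D y|.
    apply: (@card_lt_of _ _ _ y).
    - apply/subsetP => w; rewrite !inE => /andP[Hw Hwx]; rewrite Hw /=.
      case/orP: (Hch w y Hw Hy) => // Hyw.
      by move: Hn; rewrite (Rt _ _ _ Hyw Hwx).
    - by rewrite inE Hy Rr.
    - by rewrite inE Hy.
  move: H; lia.
have F3 : forall z, z != x -> R x z = (#|Nx| <= rank z).
  move=> z Hz; have Hdz := HD z Hz; rewrite /rank.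
  apply/idP/idP => H.
    have: #|Nx| < #|D z|.
      apply: (@card_lt_of _ _ _ z).
      - apply/subsetP => w; rewrite !inE => /andP[Hw Hxw]; rewrite Hw /=.
        case/orP: (Hch w z Hw Hz) => // Hzw.
        by move: Hxw; rewrite (Rt _ _ _ H Hzw).
      - by rewrite inE Hz Rr.
      - by rewrite inE Hz H.
    lia.
  apply/negPn/negP => Hn.
  have: #|D z| <= #|Nx|.
    apply: subset_leq_card; apply/subsetP => w; rewrite !inE => /andP[-> Hw] /=.
    by apply: contra Hn => Hxw; exact: Rt Hxw Hw.
  move: H; lia.
have Haj : #|Dx| < #|Nx|.
  apply: (@card_lt_of _ _ _ c).
  - apply/subsetP => w; rewrite /Dx /Nx !inE => /andP[Hw Hwx]; rewrite Hw /=.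
    apply/negP => Hxw; have E : w = x by apply: Ra; rewrite Hwx Hxw.
    by rewrite E eqxx in Hw.
  - by rewrite /Nx inE Hcx; move: Hc; rewrite negb_or => /andP[-> _].
  - by rewrite /Dx inE Hcx; move: Hc; rewrite negb_or => /andP[_ ->].
have Hjm : #|Nx| <= m.
  apply: (leq_trans _ (eq_leq HA)); apply: subset_leq_card; apply/subsetP => w; rewrite inE Hin.
  by case/andP.
have Hrk : forall y, y != x -> rank y < m.
  by move=> y Hy; have := HD y Hy; rewrite /rank; lia.
pose phi y : 'I_m.+1 := inord (if y == x then m else rank y).
have Hphi : forall y, nat_of_ord (phi y) = if y == x then m else rank y.
  move=> y; rewrite /phi inordV //; case: eqP => // /eqP Hy.
  by have := Hrk y Hy; lia.
have phi_inj : injective phi.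
  move=> y z /(congr1 val) /=; rewrite !Hphi.
  case: (eqVneq y x) => [->|Hy]; case: (eqVneq z x) => [->|Hz] //.
  - by have := Hrk z Hz; lia.
  - by have := Hrk y Hy; lia.
  by move=> E; apply: Ra; rewrite !F1 // E leqnn.
exists (#|Dx|), (#|Nx|), (perm phi_inj); split => // y z.
rewrite !permE /Gr !Hphi.
case: (eqVneq y x) => [->|Hy]; case: (eqVneq z x) => [->|Hz];
  rewrite ?eqxx ?(negbTE Hy) ?(negbTE Hz) ?ltnn ?Hrk //=.
- by rewrite Rr.
- by rewrite F3.
- by rewrite F2.
- by rewrite F1.
Qed.
End Decomp.

Section IsoG.
Variable n : nat.
Implicit Types E : {set 'I_n * 'I_n}.

Lemma iso_refl E : iso_graph E E.
Proof. by apply/existsP; exists 1%g; apply/forallP => a; apply/forallP => b; rewrite !perm1. Qed.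

Lemma iso_sym E1 E2 : iso_graph E1 E2 -> iso_graph E2 E1.
Proof.
case/existsP => s /forallP H; apply/existsP; exists (s^-1)%g.
apply/forallP => a; apply/forallP => b.
by move/forallP: (H (s^-1 a)%g) => /(_ (s^-1 b)%g); rewrite !permKV eq_sym.
Qed.

Lemma iso_trans E1 E2 E3 : iso_graph E1 E2 -> iso_graph E2 E3 -> iso_graph E1 E3.
Proof.
case/existsP => s /forallP H; case/existsP => t /forallP H'.
apply/existsP; exists (s * t)%g; apply/forallP => a; apply/forallP => b.
move/forallP: (H a) => /(_ b) /eqP ->.
by move/forallP: (H' (s a)) => /(_ (s b)) /eqP ->; rewrite !permM.
Qed.

Lemma count_classes (U : {set {set 'I_n * 'I_n}}) (D : finType) (Ds : {set D})
    (g : D -> {set 'I_n * 'I_n}) :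
  (forall d, d \in Ds -> g d \in U) ->
  (forall E, E \in U -> exists2 d, d \in Ds & iso_graph E (g d)) ->
  {in Ds &, forall d d', iso_graph (g d) (g d') -> d = d'} ->
  num_iso_classes U = #|Ds|.
Proof.
move=> Hg Hsurj Hinj; rewrite /num_iso_classes.
pose cls E := [set E' in U | iso_graph E E'].
have Hcls : forall E E', iso_graph E E' -> cls E = cls E'.
  move=> E E' H; apply/setP => F; rewrite !inE; apply/andb_id2l => _; apply/idP/idP => H2.
    exact: iso_trans (iso_sym H) H2.
  exact: iso_trans H H2.
have -> : [set cls E | E in U] = [set cls (g d) | d in Ds].
  apply/setP => X; apply/imsetP/imsetP => [[E HE ->]|[d Hd ->]].
    by case: (Hsurj E HE) => d Hd Hi; exists d => //; exact: Hcls.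
  by exists (g d) => //; exact: Hg.
apply: card_in_imset => d d' Hd Hd' E.
apply: Hinj => //.
have : g d' \in cls (g d') by rewrite inE Hg // iso_refl.
by rewrite -E inE => /andP[].
Qed.
End IsoG.

Lemma card_pairs k : #|[set p : 'I_k * 'I_k | p.1 < p.2]| = 'C(k, 2).
Proof.
rewrite -[k in 'C(k, 2)]card_ord -card_draws.
rewrite -(@card_in_imset _ _ (fun p : 'I_k * 'I_k => [set p.1; p.2])).
  apply: eq_card => A; rewrite inE; apply/imsetP/idP => [[[a b] Hab ->]|].
    by move: Hab; rewrite inE /= => Hab; rewrite cards2 -val_eqE /= neq_ltn Hab.
  case/cards2P => x [y [Hxy ->]].
  case: (ltngtP x y) => H.
  - by exists (x, y); rewrite ?inE.
  - by exists (y, x); rewrite ?inE // setUC.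
  - by move: Hxy; rewrite (val_inj H) eqxx.
move=> [a b] [a' b']; rewrite !inE /= => Hab Hab' E.
have M : forall u, ((u == a) || (u == b)) = ((u == a') || (u == b')).
  by move=> u; rewrite -!in_set2 E.
have VE : forall u v : 'I_k, (u == v) = (nat_of_ord u == nat_of_ord v) by [].
move: (M a) (M b) (M a') (M b'); rewrite !eqxx /= ?orbT !VE => h1 h2 h3 h4.
have e1 : nat_of_ord a = a' by lia.
have e2 : nat_of_ord b = b' by lia.
by rewrite (val_inj e1) (val_inj e2).
Qed.

Lemma bin2_double k : 2 * 'C(k, 2) = k * (k - 1).
Proof.
elim: k => [|k IH] //.
rewrite binS bin1 mulnDr IH; case: k IH => [|k] _ //=; nia.
Qed.

Lemma lt_of_neq_max m (u : 'I_m.+1) : u != ord_max -> u < m.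
Proof.
have VE : (u == ord_max) = (nat_of_ord u == m) by [].
by rewrite VE => H; have := ltn_ord u; lia.
Qed.

Lemma neq_ord_val n (u v : 'I_n) : (u != v) = (nat_of_ord u != nat_of_ord v).
Proof. by []. Qed.

Section SymU.
Variables (m a j : nat) (R : rel 'I_m.+1) (s : {perm 'I_m.+1}).
Hypotheses (Haj : a < j) (Hjm : j <= m).
Hypothesis HR : forall y z, R y z = Gr m a j (s y) (s z).

Lemma HR' u v : R (s^-1 u)%g (s^-1 v)%g = Gr m a j u v.
Proof. by rewrite HR !permKV. Qed.

Lemma HPR : is_poset R.
Proof.
have [Rr Ra Rt] := Gr_poset m (ltnW Haj).
split.
- by move=> y; rewrite HR Rr.
- by move=> y z; rewrite !HR => /Ra /perm_inj.
- by move=> y x z; rewrite !HR; apply: Rt.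
Qed.

Lemma sneq y u : (y != (s^-1 u)%g) = (s y != u).
Proof. by rewrite (can2_eq (permK s) (permKV s)). Qed.

Lemma unsym_R : a.+1 < j -> locally_unsymmetric R.
Proof.
move=> Ha1; apply: (unsym_of_trivial ord0).
have Ham : (a < m) = true by lia.
have Ha1m : (a.+1 < m) = true by lia.
have Hia : nat_of_ord (inord a : 'I_m.+1) = a by rewrite inordV //; lia.
have Hib : nat_of_ord (inord a.+1 : 'I_m.+1) = a.+1 by rewrite inordV //; lia.
apply: (@aut_trivial _ R (s^-1 ord_max)%g (s^-1 (inord a))%g (s^-1 (inord a.+1))%g HPR).
- move=> y z; rewrite !sneq !HR => /lt_of_neq_max Hy /lt_of_neq_max Hz.
  by rewrite /Gr Hy Hz /= leq_total.
- by rewrite (inj_eq (@perm_inj _ _)) neq_ord_val Hia Hib; lia.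
- by rewrite (inj_eq (@perm_inj _ _)) neq_ord_val Hia /=; lia.
- by rewrite (inj_eq (@perm_inj _ _)) neq_ord_val Hib /=; lia.
- by rewrite HR' /Gr /= Hia ltnn Ham /=; lia.
- by rewrite HR' /Gr /= Hia ltnn Ham /=; lia.
- by rewrite HR' /Gr /= Hib ltnn Ha1m /=; lia.
- by rewrite HR' /Gr /= Hib ltnn Ha1m /=; lia.
Qed.

Lemma sym_R : j = a.+1 -> ~ locally_unsymmetric R.
Proof.
move=> Hj Hu; apply: Hu.
have Ham : (a < m) = true by lia.
have Hia : nat_of_ord (inord a : 'I_m.+1) = a by rewrite inordV //; lia.
have H1 : ~~ R (s^-1 ord_max)%g (s^-1 (inord a))%g.
  by rewrite HR' /Gr /= Hia ltnn Ham /=; lia.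
have H2 : ~~ R (s^-1 (inord a))%g (s^-1 ord_max)%g.
  by rewrite HR' /Gr /= Hia ltnn Ham /=; lia.
apply: (sym_of_swap HPR _ H1 H2).
  by rewrite (inj_eq (@perm_inj _ _)) neq_ord_val Hia /=; lia.
apply: (swap_aut HPR H1 H2) => z; rewrite !sneq !HR !permKV => Hz1 Hz2.
have Hz := lt_of_neq_max Hz1.
move: Hz2; rewrite neq_ord_val Hia => Hz2.
by rewrite /Gr /= Hz Hia ltnn Ham /= leq_total andbT; lia.
Qed.
End SymU.

Lemma GrG_in_U m i j : i < j <= m -> GrG m i j \in posets_nl m.+1 m.
Proof.
move=> H; rewrite inE rel_GrG Gr_height // eqxx andbT.
by apply/asboolP; apply: Gr_poset; case/andP: H => /ltnW.
Qed.

Lemma U_decomp m E : E \in posets_nl m.+1 m ->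
  exists a j (s : {perm 'I_m.+1}),
    [/\ a < j, j <= m & forall y z, rel_of E y z = Gr m a j (s y) (s z)].
Proof. by rewrite inE => /andP[/asboolP HP /eqP Hh]; apply: decomp. Qed.

Lemma iso_of_decomp m E a j (s : {perm 'I_m.+1}) :
  (forall y z, rel_of E y z = Gr m a j (s y) (s z)) -> iso_graph E (GrG m a j).
Proof.
move=> H; apply/existsP; exists s; apply/forallP => y; apply/forallP => z.
by rewrite inE /= -H.
Qed.

Theorem mainTheorem13 (n : nat) : 1 <= n ->
  2 * p_count n (n - 1) = n * (n - 1) /\
  2 * u_count n (n - 1) = (n - 1) * (n - 2).
Proof.
case: n => [|m] // _.
have -> : m.+1 - 1 = m by lia.
have -> : m.+1 - 2 = m - 1 by lia.
split.
  rewrite /p_count (@count_classes _ _ _ [set p : 'I_m.+1 * 'I_m.+1 | p.1 < p.2]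
     (fun p => GrG m p.1 p.2)).
  - by rewrite card_pairs bin2_double subSS subn0.
  - move=> [i j]; rewrite inE /= => H; apply: GrG_in_U.
    by rewrite H /= -ltnS ltn_ord.
  - move=> E /U_decomp [a [j [s [Haj Hjm HR]]]].
    exists (inord a, inord j); first by rewrite inE /= !inordV //; lia.
    by rewrite /= !inordV; [apply: iso_of_decomp HR | lia | lia].
  - move=> [i j] [i' j']; rewrite !inE /= => H H' /Gr_iso_inj [].
    + by rewrite H /= -ltnS ltn_ord.
    + by rewrite H' /= -ltnS ltn_ord.
    by move=> /val_inj -> /val_inj ->.
rewrite /u_count (@count_classes _ _ _ [set p : 'I_m * 'I_m | p.1 < p.2]
     (fun p => GrG m p.1 p.2.+1)).
- by rewrite card_pairs bin2_double.
- move=> [i j]; rewrite inE /= => H; rewrite inE GrG_in_U; last first.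
    by rewrite ltnS (ltnW H) /= ltn_ord.
  rewrite /=; apply/asboolP; apply: (@unsym_R m i j.+1 _ 1%g).
  + by rewrite ltnS ltnW.
  + exact: ltn_ord.
  + by move=> y z; rewrite !perm1 rel_GrG.
  + by rewrite ltnS.
- move=> E; rewrite inE => /andP[/U_decomp [a [j [s [Haj Hjm HR]]]] /asboolP Hu].
  have Ha1 : a.+1 < j.
    rewrite ltn_neqAle Haj andbT; apply/eqP => Hj.
    exact: (sym_R Haj Hjm HR (esym Hj) Hu).
  have Ham : a < m by lia.
  have Hjm' : j.-1 < m by lia.
  exists (Ordinal Ham, Ordinal Hjm'); first by rewrite inE /=; lia.
  rewrite /= prednK; last lia.
  exact: iso_of_decomp HR.
- move=> [i j] [i' j']; rewrite !inE /= => H H' /Gr_iso_inj [].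
  + by rewrite ltnS (ltnW H) /= ltn_ord.
  + by rewrite ltnS (ltnW H') /= ltn_ord.
  by move=> /val_inj -> [] /val_inj ->.
Qed.
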